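(* Let $A$ be a set and $n\in\mathbb{N}$. The following are equivalent: (a) For every centraliser clone $F$ on $A$ we have $F=F^{(n)**}$. (b) For every centraliser clone $F$ we have $F^{(n)*}=F^*$. (c) For every centraliser clone $F$ we have $F^{(n)*(n)*}=F$. (d) For every centraliser clone $F$ there is some $G\subseteq\bigcup_{\ell\leq n}\mathrm{Op}^{(\ell)}(A)$ with $F=G^*$. (e) For every centraliser clone $F$ there is some $G\subseteq\mathrm{Op}^{(n)}(A)$ with $F=G^*$. (f) For every set $F\subseteq\mathrm{Op}(A)$ we have $F^{*(n)*}=F^{**}$. (g) For every centraliser clone $F$ we have $F^{*(n)*}=F$.
   Context: $\mathrm{Op}(A)$ is the set of all finitary operations $A^m\to A$ with $m\geq 1$ (nullary operations excluded), and $\mathrm{Op}^{(\ell)}(A)$ the set of $\ell$-ary ones. For $F\subseteq\mathrm{Op}(A)$, $F^{(n)}$ denotes the set of $n$-ary members of $F$. An $m$-ary $g$ commutes with an $n$-ary $h$ if $g\bigl((h((x_{ij})_{j}))_{i}\bigr)=h\bigl((g((x_{ij})_{i}))_{j}\bigr)$ for all $(x_{ij})\in A^{m\times n}$; $F^*$ (the centraliser of $F$) is the set of all $g\in\mathrm{Op}(A)$ commuting with every member of $F$. Superscript operators are applied from left to right, e.g. $F^{(n)*(n)*}=((((F^{(n)})^* )^{(n)})^* )$ and $F^{*(n)*}=((F^* )^{(n)})^*$. A centraliser clone is a set $F\subseteq\mathrm{Op}(A)$ with $F^{**}=F$. *)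

(* Defs.v *)
From mathcomp Require Import all_boot.
Set Implicit Arguments. Unset Strict Implicit. Unset Printing Implicit Defensive.

(* A finitary operation on A of arity m >= 1 (nullary operations excluded):
   we store m-1 in [ar_pred], so the arity [arity g] = (ar_pred g).+1 >= 1. *)
Record op (A : Type) := Op { ar_pred : nat; fn : ('I_ar_pred.+1 -> A) -> A }.
Arguments ar_pred {A} _.
Arguments fn {A} _ _.

Definition arity (A : Type) (g : op A) : nat := (ar_pred g).+1.

Definition opset (A : Type) := op A -> Prop.

Definition opset_eq (A : Type) (F G : opset A) : Prop := forall g, F g <-> G g.
Definition opset_sub (A : Type) (F G : opset A) : Prop := forall g, F g -> G g.

Definition commutes (A : Type) (g h : op A) : Prop :=
  forall x : 'I_(ar_pred g).+1 -> 'I_(ar_pred h).+1 -> A,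
    fn g (fun i => fn h (fun j => x i j)) = fn h (fun j => fn g (fun i => x i j)).

Definition centraliser (A : Type) (F : opset A) : opset A :=
  fun g => forall f, F f -> commutes g f.

Definition nary (A : Type) (n : nat) (F : opset A) : opset A :=
  fun g => F g /\ arity g = n.

Definition upto_arity (A : Type) (n : nat) : opset A := fun g => arity g <= n.
Definition of_arity (A : Type) (n : nat) : opset A := fun g => arity g = n.

Definition centraliser_clone (A : Type) (F : opset A) : Prop :=
  opset_eq (centraliser (centraliser F)) F.

(* Main.v *)
From Stdlib Require Import FunctionalExtensionality.
Require Import Defs.
From mathcomp Require Import all_boot.
Set Implicit Arguments. Unset Strict Implicit.

Section Aux.
Variable A : Type.
Local Notation C := (@centraliser A).

Lemma comm_sym (g h : op A) : commutes g h -> commutes h g.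
Proof. move=> H y; symmetry; exact: (H (fun i j => y j i)). Qed.

Lemma C_anti (F G : opset A) : opset_sub F G -> opset_sub (C G) (C F).
Proof. move=> FG g Hg f Ff; exact: Hg _ (FG _ Ff). Qed.

Lemma C_ext (F : opset A) : opset_sub F (C (C F)).
Proof. move=> g Fg f Cf; apply: comm_sym; exact: Cf. Qed.

Lemma C_resp (F G : opset A) : opset_eq F G -> opset_eq (C F) (C G).
Proof. move=> E g; split; apply: C_anti => f /E //. Qed.

Lemma nary_resp n (F G : opset A) : opset_eq F G -> opset_eq (nary n F) (nary n G).
Proof. move=> E g; rewrite /nary; have := E g; tauto. Qed.

Lemma nary_sub n (F : opset A) : opset_sub (nary n F) F.
Proof. by move=> g []. Qed.

Lemma C3 (F : opset A) : opset_eq (C (C (C F))) (C F).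
Proof. move=> g; split; [apply: C_anti; apply: C_ext | apply: C_ext]. Qed.

Lemma eq_sym' (F G : opset A) : opset_eq F G -> opset_eq G F.
Proof. move=> E g; have := E g; tauto. Qed.

Lemma eq_trans' (F G H : opset A) : opset_eq F G -> opset_eq G H -> opset_eq F H.
Proof. move=> E1 E2 g; have := E1 g; have := E2 g; tauto. Qed.

Lemma CC_clone (F : opset A) : centraliser_clone (C (C F)).
Proof. rewrite /centraliser_clone; apply: C3. Qed.

Lemma C_clone (F : opset A) : centraliser_clone (C F).
Proof. apply: C3. Qed.

Definition pad n (g : op A) : op A :=
  @Op A n.-1 (fun x => fn g (fun i => x (inord i))).

Lemma pad_comm n (g h : op A) : arity g <= n ->
  commutes (pad n g) h <-> commutes g h.
Proof.
move=> Hn; split=> H x.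
- have E : forall i : 'I_(ar_pred g).+1, inord (inord i : 'I_n.-1.+1) = i.
    move=> i; apply: val_inj => /=.
    have Hi : (i : nat) < n.-1.+1.
      have := ltn_ord i; rewrite /arity in Hn => Hi.
      rewrite prednK; [exact: leq_trans Hi Hn| exact: leq_trans Hn].
    have Hv : ((inord i : 'I_n.-1.+1) : nat) = i by rewrite inordK.
    by rewrite inordK Hv.
  have := H (fun k j => x (inord k) j) => /=.
  have X : forall i : 'I_(ar_pred g).+1, x (inord (inord i : 'I_n.-1.+1)) = x i by move=> i; rewrite E.
  have -> : (fun i : 'I_(ar_pred g).+1 => fn h (fun j => x (inord (inord i : 'I_n.-1.+1)) j))
     = (fun i => fn h (fun j => x i j)) by apply: functional_extensionality => i; rewrite X.
  have -> : (fun j : 'I_(ar_pred h).+1 => fn g (fun i => x (inord (inord i : 'I_n.-1.+1)) j))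
     = (fun j => fn g (fun i => x i j)).
    apply: functional_extensionality => j; congr (fn g _).
    by apply: functional_extensionality => i; rewrite X.
  done.
- exact: (H (fun i j => x (inord i) j)).
Qed.

End Aux.

Theorem proposition2p1 (A : Type) (n : nat) :
  [<->
   (* (a) *) forall F : opset A, centraliser_clone F ->
       opset_eq F (centraliser (centraliser (nary n F)));
   (* (b) *) forall F : opset A, centraliser_clone F ->
       opset_eq (centraliser (nary n F)) (centraliser F);
   (* (c) *) forall F : opset A, centraliser_clone F ->
       opset_eq (centraliser (nary n (centraliser (nary n F)))) F;
   (* (d) *) forall F : opset A, centraliser_clone F ->
       exists G : opset A, opset_sub G (upto_arity n) /\ opset_eq F (centraliser G);
   (* (e) *) forall F : opset A, centraliser_clone F ->
       exists G : opset A, opset_sub G (of_arity n) /\ opset_eq F (centraliser G);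
   (* (f) *) forall F : opset A,
       opset_eq (centraliser (nary n (centraliser F))) (centraliser (centraliser F));
   (* (g) *) forall F : opset A, centraliser_clone F ->
       opset_eq (centraliser (nary n (centraliser F))) F].
Proof.
tfae.
-
  move=> Ha F cF.
  apply: eq_sym'; apply: eq_trans' (C_resp (Ha F cF)) _; apply: C3.
-
  move=> Hb F cF.
  apply: eq_trans' (C_resp (nary_resp n (Hb F cF))) _.
  apply: eq_trans' (Hb _ (C_clone F)) cF.
-
  move=> Hc F cF.
  exists (nary n (centraliser (nary n F))); split.
    by move=> g [_ E]; rewrite /upto_arity E.
  exact: eq_sym' (Hc F cF).
-
  move=> Hd F cF.
  have [G [GS E]] := Hd F cF.
  exists (fun g' => exists g, G g /\ g' = pad n g); split.
    move=> _ [g [Gg ->]]; have := GS _ Gg; rewrite /upto_arity /of_arity /arity /= => Hg.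
    rewrite prednK //; exact: leq_trans Hg.
  apply: eq_trans' E _ => f; split.
    move=> Hf _ [g [Gg ->]]; apply: comm_sym; apply: (proj2 (@pad_comm A n g f (GS _ Gg))).
    apply: comm_sym; exact: Hf.
  move=> Hf g Gg; apply: comm_sym; apply: (proj1 (@pad_comm A n g f (GS _ Gg))).
  apply: comm_sym; apply: Hf; by exists g.
-
  have eg : (forall F : opset A, centraliser_clone F ->
       exists G : opset A, opset_sub G (of_arity n) /\ opset_eq F (centraliser G)) ->
       forall F : opset A, centraliser_clone F ->
       opset_eq (centraliser (nary n (centraliser F))) F.
    move=> He F cF; have [G [GS E]] := He F cF.
    have sub1 : opset_sub G (nary n (centraliser F)).
      move=> g Gg; split; last exact: GS.
      apply: (proj2 (C_resp E g)); exact: C_ext.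
    move=> g; split.
      move=> Hg; apply/E; exact: (C_anti sub1).
    move=> Fg; have H1 : centraliser (centraliser F) g by move=> f Cf; apply: comm_sym; exact: Cf.
    move=> f [Cf _]; exact: H1.
  move=> He F.
  have := eg He _ (CC_clone F).
  apply: eq_trans'; apply: C_resp; apply: nary_resp; exact: eq_sym' (C3 F).
-
  move=> Hf F cF; exact: eq_trans' (Hf F) cF.
-
  move=> Hg F cF.
  have Hb : opset_eq (centraliser (nary n F)) (centraliser F).
    apply: eq_trans' _ (Hg _ (C_clone F)).
    apply: C_resp; apply: nary_resp; exact: eq_sym' cF.
  apply: eq_sym'; apply: eq_trans' (C_resp Hb) cF.
Qed.
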